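(* Let $\Omega=\{1,\dots,m\}$, $n\ge1$, $b\in\mathbb{R}^n_{+}$, $v\in\mathbb{R}^{m\times n}_{+}$, and $u\in\mathbb{R}^{m\times m}_{+}$ with $u_{pp}=0$ for all $p$. Define $h:2^{\Omega}\to\mathbb{R}$ by $h(\emptyset)=0$ and $h(\mathcal{S})=\sum_{j=1}^nb_j\max_{i\in\mathcal{S}}v_{ij}+\sum_{(p,q)\in\mathcal{S}\times\mathcal{S}}u_{pq}$ for $\mathcal{S}\neq\emptyset$. Then for all $\ell\in\{0,\dots,m-1\}$ and $k\in\{0,\dots,m\}$, $d^{\ell,k}[h]\le|\mathrm{supp}(u)|\max\{u_{pq}:(p,q)\in\Omega^2\}$.
   Context: $\mathrm{supp}(u)=\{(p,q)\in\Omega^2:u_{pq}>0\}$. $d^{\ell,k}[h]=\max\{h(\mathcal{A}\cup\mathcal{B}\cup\{s\})-h(\mathcal{A}\cup\mathcal{B})-h(\mathcal{A}\cup\{s\})+h(\mathcal{A}):\mathcal{A},\mathcal{B}\subseteq\Omega,s\in\Omega,|\mathcal{A}|=\ell,|\mathcal{B}|=k\}$. *)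

(* Defs.v *)
From HB Require Import structures.
From mathcomp Require Import all_boot all_order all_algebra.
Set Implicit Arguments. Unset Strict Implicit. Unset Printing Implicit Defensive.
Import Order.TTheory GRing.Theory Num.Theory.
Local Open Scope ring_scope.

(* Omega = 'I_m (i.e. {1..m} shifted to {0..m-1}); subsets are {set 'I_m}. *)

(* The max over the nonempty S is a big max with neutral 0; since v >= 0
   this equals the genuine maximum. *)
Definition hfun (R : realFieldType) (m n : nat) (b : 'I_n -> R)
  (v : 'I_m -> 'I_n -> R) (u : 'I_m -> 'I_m -> R) (S : {set 'I_m}) : R :=
  if S == set0 then 0 else
    \sum_(j < n) b j * \big[Num.max/0]_(i in S) v i j
    + \sum_(p in S) \sum_(q in S) u p q.

Definition ddiff (R : realFieldType) (m : nat) (h : {set 'I_m} -> R)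
  (A B : {set 'I_m}) (s : 'I_m) : R :=
  h (A :|: B :|: [set s]) - h (A :|: B) - h (A :|: [set s]) + h A.

(* Computed as the max of the (finite) list of candidate values; the
   initial value is the head of that list, so for a nonempty candidate set
   this is exactly the maximum (for an empty candidate set it is 0, a
   convention irrelevant here since the set is nonempty when l, k <= m). *)
Definition dlk (R : realFieldType) (m : nat) (h : {set 'I_m} -> R)
  (l k : nat) : R :=
  let vals := [seq ddiff h x.1.1 x.1.2 x.2 |
                x <- enum [set x : {set 'I_m} * {set 'I_m} * 'I_m |
                           (#|x.1.1| == l) && (#|x.1.2| == k)]] in
  \big[Num.max/head 0 vals]_(y <- vals) y.

Definition supp (R : realFieldType) (m : nat) (u : 'I_m -> 'I_m -> R)
  : {set 'I_m * 'I_m} :=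
  [set pq | 0 < u pq.1 pq.2].

(* max {u_pq : (p,q) in Omega^2}; big max with neutral 0, which equals the
   genuine max since u >= 0 and Omega is nonempty (m >= 1). *)
Definition umax (R : realFieldType) (m : nat) (u : 'I_m -> 'I_m -> R) : R :=
  \big[Num.max/0]_(pq : 'I_m * 'I_m) u pq.1 pq.2.

(* Main.v *)
Require Import Defs.
From HB Require Import structures.
From mathcomp Require Import all_boot all_order all_algebra.
From mathcomp Require Import ring lra.
Import Order.TTheory GRing.Theory Num.Theory.
Local Open Scope ring_scope.

Section Aux.
Variable R : realFieldType.
Variable m : nat.

Lemma Mset1 (f : 'I_m -> R) (Y : {set 'I_m}) s :
  (forall i, 0 <= f i) ->
  \big[Num.max/0]_(i in Y :|: [set s]) f i = Num.max (\big[Num.max/0]_(i in Y) f i) (f s).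
Proof.
move=> f0; apply/le_anti/andP; split.
  apply: bigmax_le; first by rewrite le_max bigmax_ge_id.
  move=> i; rewrite !inE => /orP[iY|/eqP->]; last by rewrite le_max lexx orbT.
  by rewrite le_max; apply/orP; left; exact: le_bigmax_cond.
rewrite ge_max bigmaxUl /=.
by apply: le_bigmax_cond; rewrite !inE eqxx orbT.
Qed.

Lemma Gind (u : 'I_m -> 'I_m -> R) (S : {set 'I_m}) :
  \sum_(p in S) \sum_(q in S) u p q =
  \sum_p \sum_q ((p \in S) && (q \in S))%:R * u p q.
Proof.
rewrite big_mkcond; apply: eq_bigr => p _.
case: (p \in S) => /=; last by rewrite big1 // => q _; rewrite mul0r.
by rewrite big_mkcond; apply: eq_bigr => q _; case: (q \in S); rewrite /= ?mul1r ?mul0r.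
Qed.

End Aux.

Theorem mainTheorem17 (R : realFieldType) (m n : nat)
  (b : 'I_n -> R) (v : 'I_m -> 'I_n -> R) (u : 'I_m -> 'I_m -> R) :
  (1 <= n)%N ->
  (forall j, 0 <= b j) ->
  (forall i j, 0 <= v i j) ->
  (forall p q, 0 <= u p q) ->
  (forall p, u p p = 0) ->
  forall l k : nat, (l < m)%N -> (k <= m)%N ->
    dlk (hfun b v u) l k <= #|supp u|%:R * umax u.
Proof.
move=> _ b0 v0 u0 _ l k _ _.
set C := #|supp u|%:R * umax u.
have C0 : 0 <= C by rewrite mulr_ge0 // /umax bigmax_ge_id.
pose M j (S : {set 'I_m}) := \big[Num.max/0]_(i in S) v i j.
pose F (S : {set 'I_m}) := \sum_(j < n) b j * M j S.
pose G (S : {set 'I_m}) := \sum_p \sum_q ((p \in S) && (q \in S))%:R * u p q.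
have hE S : hfun b v u S = F S + G S.
  rewrite /hfun /F /G -Gind; case: eqP => [->|_] //.
  rewrite !big_set0 big1 ?addr0 // => j _.
  by rewrite /M big_set0 mulr0.
have key A B s : ddiff (hfun b v u) A B s <= C.
  rewrite /ddiff !hE.
  have HF : F (A :|: B :|: [set s]) - F (A :|: B) - F (A :|: [set s]) + F A <= 0.
    rewrite /F -!sumrB -big_split; apply: sumr_le0 => j _.
    rewrite /= -!mulrBr -mulrDr; apply: mulr_ge0_le0 => //.
    rewrite /M !Mset1 // -/(M j _) -/(M j _).
    have : M j A <= M j (A :|: B) by apply: bigmaxUl.
    rewrite /M; set x := \big[Num.max/0]_(i in A) v i j.
    set y := \big[Num.max/0]_(i in A :|: B) v i j.
    move=> hxy; rewrite !maxEle; case: ifP => h1; case: ifP => h2; lra.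
  have HG : G (A :|: B :|: [set s]) - G (A :|: B) - G (A :|: [set s]) + G A
      <= \sum_p \sum_q u p q.
    rewrite /G -!sumrB -big_split; apply: ler_sum => p _.
    rewrite -!sumrB -big_split; apply: ler_sum => q _.
    have := u0 p q; rewrite !inE.
    by case: (p \in A); case: (p \in B); case: (p == s);
       case: (q \in A); case: (q \in B); case: (q == s) => /= h; lra.
  have HS : \sum_p \sum_q u p q <= C.
    rewrite pair_bigA /=.
    apply: (@le_trans _ _ (\sum_(pq : 'I_m * 'I_m) if pq \in supp u then umax u else 0)).
      apply: ler_sum => [[p q]] _ /=.
      rewrite /supp inE /=; case: ifP => hp.
        exact: (le_bigmax 0 (fun pq : 'I_m * 'I_m => u pq.1 pq.2) (p, q)).
      by move: (u0 p q); rewrite le_eqVlt hp orbF => /eqP <-.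
    by rewrite -big_mkcond /= sumr_const /C mulr_natl.
  lra.
rewrite /dlk /=.
set vals := [seq _ | _ <- _].
have Hv y : y \in vals -> y <= C.
  by move=> /mapP[[[A B] s] _ ->]; apply: key.
rewrite big_seq_cond; elim/big_ind: _ => //.
- by case: vals Hv => //= y t Hv; apply: Hv; rewrite inE eqxx.
- by move=> x y hx hy; rewrite ge_max hx hy.
- by move=> i /andP[/Hv].
Qed.
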